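(* Let $m\ge0$ be an integer and write $s_n=s_n^{(1,m+2)}$. Then for all $n\ge0$, \[ s_n^2=\delta_{n,0}+s_{n-1}^2+s_{n-m-2}^2+2\sum_{l=m+2}^n P_{l-1}^{\{-2,-1,m\}}s_{n-l}^2 . \]
   Context: For positive integers $p<q$, $s_n^{(p,q)}$ is defined by $s_n^{(p,q)}=\delta_{0,n}+s_{n-p}^{(p,q)}+s_{n-q}^{(p,q)}$ for $n\ge0$ and $s_n^{(p,q)}=0$ for $n<0$. $\delta_{i,j}$ is $1$ if $i=j$ and $0$ otherwise. For a finite set $W$ of integers, $P_n^W$ is the number of permutations $\pi$ of $\{1,\dots,n\}$ with $\pi(i)-i\in W$ for all $i$ (the permanent of the $n\times n$ $(0,1)$ Toeplitz matrix whose $(i,j)$ entry is $1$ iff $j-i\in W$), with $P_0^W=1$. Empty sums are $0$. *)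

(* Defs.v *)
From mathcomp Require Import all_boot all_order all_algebra all_fingroup.
Set Implicit Arguments. Unset Strict Implicit. Unset Printing Implicit Defensive.
Import GRing.Theory Num.Theory.

(* s_n^{(p,q)} on natural indices, computed by fuel-bounded recursion:
   s_n = [n = 0] + s_{n-p} + s_{n-q}, where a term s_{n-r} with n < r is 0.
   Fuel n.+1 suffices whenever p, q >= 1 (each step decreases n). *)
Fixpoint s_aux (p q k n : nat) : nat :=
  match k with
  | 0 => 0
  | k'.+1 => (n == 0) + (if p <= n then s_aux p q k' (n - p) else 0)
                      + (if q <= n then s_aux p q k' (n - q) else 0)
  end.

Definition s_nat (p q n : nat) : nat := s_aux p q n.+1 n.

Definition s (p q : nat) (n : int) : nat :=
  match n with Posz k => s_nat p q k | Negz _ => 0 end.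

(* P_n^W: number of permutations pi of {1..n} (here indexed 0..n-1; the
   difference pi(i) - i is unchanged) with pi(i) - i in W for all i. *)
Definition Pperm (W : seq int) (n : nat) : nat :=
  #|[set sigma : 'S_n | [forall i : 'I_n,
        ((sigma i : nat)%:Z - (i : nat)%:Z)%R \in W]]|.

(* Main.v *)
Require Import Defs.
From mathcomp Require Import all_boot all_order all_algebra all_fingroup.
From mathcomp Require Import zify.
Set Implicit Arguments. Unset Strict Implicit. Unset Printing Implicit Defensive.

Definition pf N (s : 'S_N) (i : nat) : nat :=
  if insub i is Some j then nat_of_ord (s j) else i.

Lemma pfO N (s : 'S_N) i (Hi : i < N) : pf s i = s (Ordinal Hi).
Proof. by rewrite /pf insubT. Qed.

Lemma pfE N (s : 'S_N) (i : 'I_N) : pf s i = s i.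
Proof. by case: i => i Hi; rewrite pfO. Qed.

Lemma pf_lt N (s : 'S_N) i : i < N -> pf s i < N.
Proof. by move=> Hi; rewrite pfO. Qed.

Lemma pf_inj N (s : 'S_N) i j : i < N -> j < N -> pf s i = pf s j -> i = j.
Proof.
move=> Hi Hj; rewrite !pfO => /val_inj /perm_inj. by case.
Qed.

Lemma pf_surj N (s : 'S_N) y : y < N -> exists i, i < N /\ pf s i = y.
Proof.
move=> Hy; exists ((s^-1)%g (Ordinal Hy)); split; first exact: ltn_ord.
by rewrite pfE permKV.
Qed.

Lemma perm_ext N (s t : 'S_N) : (forall i, i < N -> pf s i = pf t i) -> s = t.
Proof.
move=> H; apply/permP => i; apply: val_inj => /=.
by rewrite -!pfE H // ltn_ord.
Qed.

Definition mkp N (f : 'I_N -> 'I_N) : 'S_N :=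
  match injectiveP f with ReflectT H => perm H | ReflectF _ => 1%g end.

Lemma mkpE N (f : 'I_N -> 'I_N) : injective f -> forall i, mkp f i = f i.
Proof.
move=> H i; rewrite /mkp; case: injectiveP => H'; first by rewrite permE.
by case: (H' H).
Qed.

Definition mk N (F : nat -> nat) : 'S_N := mkp (fun i : 'I_N => insubd i (F i)).

Lemma mkE N (F : nat -> nat) :
  (forall i, i < N -> F i < N) ->
  (forall i j, i < N -> j < N -> F i = F j -> i = j) ->
  forall i, i < N -> pf (mk N F) i = F i.
Proof.
move=> Hr Hi.
have Hinj : injective (fun i : 'I_N => insubd i (F i)).
  move=> a b /(congr1 val); rewrite !val_insubd !Hr ?ltn_ord // => E.
  by apply: val_inj; apply: Hi => //; apply: ltn_ord.
move=> i Hlt; rewrite pfO /mk mkpE // val_insubd Hr //.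
Qed.

Lemma card_gt0_nat N (P : nat -> bool) :
  0 < #|[set i : 'I_N | P i]| <-> exists a, a < N /\ P a.
Proof.
split.
  move/card_gt0P => [i]; rewrite inE => Hp; exists i; split => //; exact: ltn_ord.
move=> [a [Ha Hp]]; apply/card_gt0P; exists (Ordinal Ha); by rewrite inE.
Qed.

Lemma card_gt1_nat N (P : nat -> bool) :
  1 < #|[set i : 'I_N | P i]| <->
  exists a b, a <> b /\ a < N /\ b < N /\ P a /\ P b.
Proof.
split.
  move/card_gt1P => [i [j [Hi Hj Hne]]]; rewrite !inE in Hi Hj.
  exists i, j; split; last by rewrite !ltn_ord.
  by move=> E; move/eqP: Hne; apply; apply: val_inj.
move=> [a [b [Hne [Ha [Hb [Pa Pb]]]]]]; apply/card_gt1P.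
exists (Ordinal Ha), (Ordinal Hb); rewrite !inE; split => //.
by apply/eqP => [[E]].
Qed.

Lemma cut_balance N (s : 'S_N) x :
  #|[set i : 'I_N | (i < x) && (x <= pf s i)]| =
  #|[set i : 'I_N | (pf s i < x) && (x <= i)]|.
Proof.
set L := [set i : 'I_N | i < x].
set S := [set i : 'I_N | pf s i < x].
have HS : #|S| = #|L|.
  have -> : S = (s @^-1: L) by apply/setP => i; rewrite !inE pfE.
  by rewrite card_preimset //; apply: perm_inj.
have h1 := cardID S L. have h2 := cardID L S.
have E1 : #|[predI L & S]| = #|[predI S & L]|.
  by apply: eq_card => i; rewrite !inE andbC.
have E2 : #|[set i : 'I_N | (i < x) && (x <= pf s i)]| = #|[predD L & S]|.
  by apply: eq_card => i; rewrite !inE -leqNgt andbC.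
have E3 : #|[set i : 'I_N | (pf s i < x) && (x <= i)]| = #|[predD S & L]|.
  by apply: eq_card => i; rewrite !inE -leqNgt andbC.
rewrite E2 E3; lia.
Qed.


Definition valid m N (s : 'S_N) :=
  forall i, i < N -> pf s i + 2 = i \/ pf s i + 1 = i \/ pf s i = i + m.

Lemma K0 N (s : 'S_N) x :
  (exists a, a < N /\ a < x <= pf s a) -> (exists b, b < N /\ pf s b < x <= b).
Proof.
move=> [a [Ha Hx]].
have : 0 < #|[set i : 'I_N | (i < x) && (x <= pf s i)]|.
  by apply/(@card_gt0_nat N (fun i => (i < x) && (x <= pf s i))); exists a.
rewrite cut_balance => /(@card_gt0_nat N (fun i => (pf s i < x) && (x <= i))) [b [Hb Hp]]; exists b; split => //.
Qed.

Lemma K0r N (s : 'S_N) x :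
  (exists b, b < N /\ pf s b < x <= b) -> (exists a, a < N /\ a < x <= pf s a).
Proof.
move=> [a [Ha Hx]].
have : 0 < #|[set i : 'I_N | (pf s i < x) && (x <= i)]|.
  by apply/(@card_gt0_nat N (fun i => (pf s i < x) && (x <= i))); exists a.
rewrite -cut_balance => /(@card_gt0_nat N (fun i => (i < x) && (x <= pf s i))) [b [Hb Hp]]; exists b; split => //.
Qed.

Lemma K2 N (s : 'S_N) x :
  (exists a1 a2, a1 <> a2 /\ a1 < N /\ a2 < N /\ a1 < x <= pf s a1 /\ a2 < x <= pf s a2) ->
  (exists b1 b2, b1 <> b2 /\ b1 < N /\ b2 < N /\ pf s b1 < x <= b1 /\ pf s b2 < x <= b2).
Proof.
move=> [a1 [a2 [Hne [H1 [H2 [P1 P2]]]]]].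
have : 1 < #|[set i : 'I_N | (i < x) && (x <= pf s i)]|.
  by apply/(@card_gt1_nat N (fun i => (i < x) && (x <= pf s i))); exists a1, a2.
by rewrite cut_balance => /(@card_gt1_nat N (fun i => (pf s i < x) && (x <= i))).
Qed.


Lemma L_up0 m N (s : 'S_N) : valid m s -> 0 < N -> pf s 0 = m.
Proof. move=> Hv HN; have := Hv 0 HN; lia. Qed.

Lemma L_up_t m N (s : 'S_N) : valid m s -> m + 1 <= N -> pf s (N - m - 1) = N - 1.
Proof.
move=> Hv HN.
have [i [Hi E]] := @pf_surj N s (N - 1) ltac:(lia).
have := Hv i Hi; rewrite E => H.
have -> : N - m - 1 = i by lia.
by rewrite E.
Qed.

Lemma L_not_up_high m N (s : 'S_N) i : i < N -> N <= i + m -> pf s i <> i + m.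
Proof. move=> Hi Hm E; have := pf_lt s Hi; lia. Qed.

Lemma L_exists_up m N (s : 'S_N) : valid m s -> m + 2 <= N ->
  exists u, N - m - 1 <= u + m + 1 /\ u < N - m - 1 /\ pf s u = u + m.
Proof.
move=> Hv HN; set t := N - m - 1.
have Ht : t - 1 < N by lia.
case: (Hv (t - 1) Ht) => [H|[H|H]]; last first.
  by exists (t - 1); split; [lia|split; [lia|]].
all: have [a [Ha Hx]] : exists a, a < N /\ a < t - 1 <= pf s a
  by (apply: K0r; exists (t - 1); split; [lia|lia]).
all: have := Hv a Ha; move=> Hva; exists a; lia.
Qed.

Lemma B_range m N (s : 'S_N) x b : valid m s -> b < N -> pf s b < x <= b -> b <= x + 1.
Proof. move=> Hv Hb Hx; have := Hv b Hb; lia. Qed.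

Lemma L_pair m N (s : 'S_N) u u' : valid m s -> m + 2 <= N ->
  u < N - m - 1 -> pf s u = u + m ->
  (forall i, u < i -> i < N - m - 1 -> pf s i <> i + m) ->
  u' < u -> pf s u' = u' + m -> u' + m + 2 <= N - m - 1.
Proof.
move=> Hv HN Hu Hfu Hno Hu' Hfu'.
set t := N - m - 1 in Hu Hno *.
have Hft : pf s t = N - 1 by (rewrite /t; apply: L_up_t; [exact: Hv|lia]).
case: (leqP (u' + m + 2) t) => // Hc.
case: (ltnP u (t - 1)) => Hut.
  have [b1 [b2 [Hne [Hb1 [Hb2 [P1 P2]]]]]] : exists b1 b2, b1 <> b2 /\ b1 < N /\ b2 < N /\ pf s b1 < t - 1 <= b1 /\ pf s b2 < t - 1 <= b2.
    by apply: K2; exists u', u; lia.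
  have := B_range Hv Hb1 P1; have := B_range Hv Hb2 P2.
  case: (eqVneq b1 t) => [E|N1]; first by rewrite E Hft in P1; lia.
  case: (eqVneq b2 t) => [E|N2]; first by rewrite E Hft in P2; lia.
  lia.
have [b [Hb Pb]] : exists b, b < N /\ pf s b < t - 1 <= b.
  by apply: K0; exists u'; lia.
have Hbr := B_range Hv Hb Pb.
have Hut' : u = t - 1 by lia.
case: (eqVneq b t) => [E|N1]; first by rewrite E Hft in Pb; lia.
have Eb : b = t - 1 by lia.
by move: Pb; rewrite Eb -Hut' Hfu; lia.
Qed.

Lemma K2r N (s : 'S_N) x :
  (exists b1 b2, b1 <> b2 /\ b1 < N /\ b2 < N /\ pf s b1 < x <= b1 /\ pf s b2 < x <= b2) ->
  (exists a1 a2, a1 <> a2 /\ a1 < N /\ a2 < N /\ a1 < x <= pf s a1 /\ a2 < x <= pf s a2).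
Proof.
move=> [a1 [a2 [Hne [H1 [H2 [P1 P2]]]]]].
have : 1 < #|[set i : 'I_N | (pf s i < x) && (x <= i)]|.
  by apply/(@card_gt1_nat N (fun i => (pf s i < x) && (x <= i))); exists a1, a2.
by rewrite -cut_balance => /(@card_gt1_nat N (fun i => (i < x) && (x <= pf s i))).
Qed.

Lemma L_tail1 m N (s : 'S_N) k : valid m s -> m + 1 <= N -> 1 <= k ->
  (forall i, N - m - 1 + k <= i + m + 1 -> i < N - m - 1 -> pf s i <> i + m) ->
  forall i, N - m - 1 + k <= i -> i < N -> pf s i = i - 1.
Proof.
move=> Hv HN Hk Hno i Hi1 Hi2.
set t := N - m - 1 in Hno Hi1.
have Hft : pf s t = N - 1 by (rewrite /t; apply: L_up_t; [exact: Hv|lia]).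
have Hnu := @L_not_up_high m N s i Hi2 ltac:(lia).
case: (Hv i Hi2) => [H|[H|H]]; [|lia|lia].
case: (eqVneq i t.+1) => [Ei|Ni].
  have [a [Ha Pa]] : exists a, a < N /\ a < t <= pf s a.
    by apply: K0r; exists i; lia.
  have := Hv a Ha => Hva.
  have Fa : pf s a = a + m by lia.
  by exfalso; apply: (Hno a _ _ Fa); lia.
have Hx : i - 1 < N by lia.
have Hnx := @L_not_up_high m N s (i - 1) Hx ltac:(lia).
have Hvx := Hv (i - 1) Hx.
have [a1 [a2 [Hne [Ha1 [Ha2 [P1 P2]]]]]] : exists a1 a2, a1 <> a2 /\ a1 < N /\ a2 < N /\ a1 < i - 1 <= pf s a1 /\ a2 < i - 1 <= pf s a2.
  by apply: K2r; exists (i - 1), i; lia.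
have Hv1 := Hv a1 Ha1; have Hv2 := Hv a2 Ha2.
have F1 : pf s a1 = a1 + m by lia.
have F2 : pf s a2 = a2 + m by lia.
have L1 := pf_lt s Ha1; have L2 := pf_lt s Ha2.
case: (ltnP a1 t) => C1; first by exfalso; apply: (Hno a1 _ _ F1); lia.
case: (ltnP a2 t) => C2; first by exfalso; apply: (Hno a2 _ _ F2); lia.
lia.
Qed.

Lemma L_tail2 m N (s : 'S_N) u : valid m s -> m + 2 <= N ->
  u < N - m - 1 -> pf s u = u + m ->
  (forall i, u < i -> i < N - m - 1 -> pf s i <> i + m) ->
  forall i, N - m - 1 < i -> i <= u + m + 1 -> pf s i = i - 2.
Proof.
move=> Hv HN Hu Hfu Hno i Hi1 Hi2.
set t := N - m - 1 in Hu Hno Hi1.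
have Hft : pf s t = N - 1 by (rewrite /t; apply: L_up_t; [exact: Hv|lia]).
have HiN : i < N by lia.
have Hnu := @L_not_up_high m N s i HiN ltac:(lia).
case: (Hv i HiN) => [H|[H|H]]; [lia| |lia].
case: (eqVneq i t.+1) => [Ei|Ni].
  have [b [Hb Pb]] : exists b, b < N /\ pf s b < t <= b.
    by apply: K0; exists u; lia.
  have Hbr := B_range Hv Hb Pb.
  case: (eqVneq b t) => [E|Nb]; first by rewrite E Hft in Pb; lia.
  have Eb : b = i by lia.
  by rewrite Eb in Pb; lia.
have [b1 [b2 [Hne [Hb1 [Hb2 [P1 P2]]]]]] : exists b1 b2, b1 <> b2 /\ b1 < N /\ b2 < N /\ pf s b1 < i - 1 <= b1 /\ pf s b2 < i - 1 <= b2.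
  by apply: K2; exists u, t; lia.
have R1 := B_range Hv Hb1 P1; have R2 := B_range Hv Hb2 P2.
case: (eqVneq b1 i) => [E|N1]; first by rewrite E in P1; lia.
case: (eqVneq b2 i) => [E|N2]; first by rewrite E in P2; lia.
lia.
Qed.


Definition validb m N (s : 'S_N) :=
  [forall i : 'I_N, (pf s i + 2 == i) || (pf s i + 1 == i) || (pf s i == i + m)].

Lemma validP m N (s : 'S_N) : reflect (valid m s) (validb m s).
Proof.
apply: (iffP forallP) => H.
  move=> i Hi; move: (H (Ordinal Hi)) => /=.
  by move=> /orP [/orP [/eqP E|/eqP E]|/eqP E]; [left|right;left|right;right].
move=> i; case: (H i (ltn_ord i)) => [E|[E|E]]; by rewrite E eqxx ?orbT.
Qed.

Definition win m N j (s : 'S_N) :=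
  [forall i : 'I_N, ((N - m - 1 < i + j) && (i < N - m - 1)) ==> (pf s i != i + m)].

Lemma winP m N j (s : 'S_N) :
  reflect (forall i, N - m - 1 < i + j -> i < N - m - 1 -> pf s i <> i + m) (win m j s).
Proof.
apply: (iffP forallP) => H.
  move=> i H1 H2; have Hi : i < N by lia.
  by move: (H (Ordinal Hi)) => /= /implyP /(_ ltac:(apply/andP; split => //)) /eqP.
move=> i; apply/implyP => /andP [H1 H2]; apply/eqP; exact: H.
Qed.

Definition Qset m N j := [set s : 'S_N | validb m s && win m j s].
Definition Q m N j := #|Qset m N j|.
Definition Sset m N j := [set s : 'S_N | validb m s && win m j s &&
  ((j <= N - m - 1) && (pf s (N - m - 1 - j) == N - m - 1 - j + m))].

Lemma Q_split m N j : 1 <= j -> Q m N j = Q m N j.+1 + #|Sset m N j|.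
Proof.
move=> Hj; rewrite /Q.
set B := [pred s : 'S_N | (j <= N - m - 1) && (pf s (N - m - 1 - j) == N - m - 1 - j + m)].
have h := cardID B (Qset m N j).
have E1 : #|[predI Qset m N j & B]| = #|Sset m N j|.
  by apply: eq_card => s; rewrite !inE.
have E2 : #|[predD Qset m N j & B]| = #|Qset m N j.+1|.
  apply: eq_card => s; rewrite !inE.
  case: (validb m s); last by rewrite ?andFb ?andbF.
  rewrite andbC /=.
  apply/idP/idP.
    move/andP => [/winP W /negP nB]; apply/winP => i H1 H2 E.
    case: (ltnP (N - m - 1) (i + j)) => H3; first exact: (W i).
    apply: nB; apply/andP; split; first by lia.
    have -> : N - m - 1 - j = i by lia.
    by rewrite E.
  move/winP => W; apply/andP; split.
    apply/winP => i H1 H2; apply: W; lia.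
  apply/negP => /andP [Hj' /eqP E]; apply: (W (N - m - 1 - j)) => //; lia.
by rewrite -h E1 E2 addnC.
Qed.

Lemma Q_top m N : m + 2 <= N -> Q m N (m + 2) = 0.
Proof.
move=> HN; rewrite /Q; apply/eqP; rewrite cards_eq0; apply/eqP; apply/setP => s.
rewrite inE in_set0; apply/negP => /andP [/validP V /winP W].
have [u [H1 [H2 H3]]] := L_exists_up V HN.
by apply: (W u _ H2 H3); lia.
Qed.

Lemma Q_base m j : Q m (m + 1) j = 1.
Proof.
set F := fun i => if i == 0 then m else i - 1.
have Fr : forall i, i < m + 1 -> F i < m + 1.
  by move=> i Hi; rewrite /F; case: eqP; lia.
have Fi : forall i k, i < m + 1 -> k < m + 1 -> F i = F k -> i = k.
  by move=> i k Hi Hk; rewrite /F; case: eqP; case: eqP; lia.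
have HF := mkE Fr Fi.
rewrite /Q (_ : Qset m (m + 1) j = [set mk (m + 1) F]) ?cards1 //.
apply/setP => s; rewrite !inE; apply/idP/eqP.
  move/andP => [/validP V _]; apply: perm_ext => i Hi; rewrite HF //.
  rewrite /F; case: eqP => [->|Ni]; first by apply: L_up0 => //; lia.
  apply: (@L_tail1 m (m + 1) s 1) => //; lia.
move=> ->; apply/andP; split.
  by apply/validP => i Hi; rewrite HF // /F; case: eqP; lia.
by apply/winP => i; lia.
Qed.

Lemma card_bij_in (aT bT : finType) (A : {set aT}) (B : {set bT})
  (f : aT -> bT) (g : bT -> aT) :
  (forall x, x \in A -> f x \in B) -> (forall y, y \in B -> g y \in A) ->
  (forall x, x \in A -> g (f x) = x) -> (forall y, y \in B -> f (g y) = y) ->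
  #|A| = #|B|.
Proof.
move=> fAB gBA gf fg.
rewrite -(@card_in_imset _ _ f A); last first.
  by move=> x y Hx Hy E; rewrite -(gf x Hx) -(gf y Hy) E.
apply: eq_card => y; apply/imsetP/idP.
  by move=> [x Hx ->]; apply: fAB.
by move=> Hy; exists (g y); [apply: gBA|rewrite fg].
Qed.


Definition PhiF m N (s : 'S_N) (i : nat) := if i < N - m - 1 then pf s i else i - 1.
Definition Phi m N g (s : 'S_N) : 'S_(N - g) := mk (N - g) (PhiF m s).

Definition PsiF m N g (h : nat -> nat) (i : nat) :=
  if i < N - m - 1 then h i else if i == N - m - 1 then N - 1
  else if i <= N - g then i - 2 else i - 1.
Definition Psi m N g (s : 'S_(N - g)) : 'S_N := mk N (PsiF m N g (pf s)).
Arguments Psi m N g s : clear implicits.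

Lemma PhiF_spec m N (s : 'S_N) i :
  (i < N - m - 1 /\ PhiF m s i = pf s i) \/ (N - m - 1 <= i /\ PhiF m s i = i - 1).
Proof. rewrite /PhiF; case: ltnP; [left|right]; by split. Qed.

Lemma PsiF_spec m N g h i :
  (i < N - m - 1 /\ PsiF m N g h i = h i) \/ (i = N - m - 1 /\ PsiF m N g h i = N - 1) \/
  (N - m - 1 < i <= N - g /\ PsiF m N g h i = i - 2) \/
  (N - m - 1 < i /\ N - g < i /\ PsiF m N g h i = i - 1).
Proof.
rewrite /PsiF; case: ifP => H1; first by left.
case: eqP => H2; first by right; left.
case: ifP => H3; [right; right; left|right; right; right]; split => //; lia.
Qed.


Lemma Sset_P m N g (s : 'S_N) :
  s \in Sset m N g <->
  [/\ valid m s, (forall i, N - m - 1 < i + g -> i < N - m - 1 -> pf s i <> i + m),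
      g <= N - m - 1 & pf s (N - m - 1 - g) = N - m - 1 - g + m].
Proof.
rewrite inE; split.
  by move=> /andP [/andP [/validP V /winP W] /andP [H /eqP E]].
by move=> [/validP V /winP W H /eqP E]; rewrite V W H E.
Qed.

Lemma Qset_P m N j (s : 'S_N) :
  s \in Qset m N j <->
  valid m s /\ (forall i, N - m - 1 < i + j -> i < N - m - 1 -> pf s i <> i + m).
Proof.
rewrite inE; split; first by move=> /andP [/validP V /winP W].
by move=> [/validP V /winP W]; rewrite V W.
Qed.

Lemma Phi_ok m N g (s : 'S_N) : m + 2 <= N -> 1 <= g <= m + 1 -> g <= N - m - 1 ->
  s \in Sset m N g ->
  (forall i, i < N - g -> pf (Phi m g s) i = PhiF m s i) /\
  Phi m g s \in Qset m (N - g) (m + 2 - g).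
Proof.
move=> HN Hg Hgt /Sset_P [V W _ Fu].
set t := N - m - 1 in W Hgt Fu.
have Hno : forall i, N - m - 1 - g < i -> i < N - m - 1 -> pf s i <> i + m.
  by move=> i H1 H2; apply: W; lia.
have Hpair : forall i, i < N - m - 1 - g -> pf s i = i + m -> i + m + 2 <= N - m - 1.
  move=> i H1 H2; apply: (@L_pair m N s (N - m - 1 - g) i) => //; lia.
have Hr : forall i, i < N - g -> PhiF m s i < N - g.
  move=> i Hi; case: (PhiF_spec m s i) => [[H1 ->]|[H1 ->]]; last lia.
  have HiN : i < N by lia.
  case: (V i HiN) => [E|[E|E]]; try lia.
  case: (ltnP (N - m - 1 - g) i) => H3; first by case: (Hno i H3 H1).
  lia.
have Hinj : forall i k, i < N - g -> k < N - g -> PhiF m s i = PhiF m s k -> i = k.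
  have key : forall i k, i < N - m - 1 -> N - m - 1 <= k -> k < N - g -> pf s i <> k - 1.
    move=> i k H1 H2 H3 E.
    have HiN : i < N by lia.
    case: (V i HiN) => [E'|[E'|E']]; try lia.
    case: (ltnP (N - m - 1 - g) i) => H4; first by case: (Hno i H4 H1).
    case: (ltnP i (N - m - 1 - g)) => H5; first by have := Hpair i H5 E'; lia.
    lia.
  move=> i k Hi Hk.
  case: (PhiF_spec m s i) => [[H1 ->]|[H1 ->]]; case: (PhiF_spec m s k) => [[H2 ->]|[H2 ->]].
  - by apply: pf_inj; lia.
  - by move=> E; case: (key i k H1 H2 Hk E).
  - by move=> E; case: (key k i H2 H1 Hi (esym E)).
  - lia.
have HE := mkE Hr Hinj.
split; first exact: HE.
apply/Qset_P; split.
  move=> i Hi; rewrite /Phi HE //.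
  case: (PhiF_spec m s i) => [[H1 ->]|[H1 ->]]; last lia.
  apply: V; lia.
move=> i H1 H2; rewrite /Phi HE; last by lia.
case: (PhiF_spec m s i) => [[H3 ->]|[H3 ->]]; last lia.
move=> E; have := Hpair i ltac:(lia) E; lia.
Qed.

Lemma Psi_ok m N g (s : 'S_(N - g)) : m + 2 <= N -> 1 <= g <= m + 1 -> g <= N - m - 1 ->
  s \in Qset m (N - g) (m + 2 - g) ->
  (forall i, i < N -> pf (Psi m N g s) i = PsiF m N g (pf s) i) /\
  Psi m N g s \in Sset m N g.
Proof.
move=> HN Hg Hgt /Qset_P [V W].
have Hut : pf s (N - g - m - 1) = N - g - 1 by apply: L_up_t => //; lia.
have tail : forall i, N - m - 1 <= i -> i < N - g -> pf s i = i - 1.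
  move=> i H1 H2; apply: (@L_tail1 m (N - g) s g) => //; try lia.
  by move=> k K1 K2; apply: W; lia.
have key : forall i, i < N - m - 1 -> pf s i < N - m - 2 \/ pf s i = N - g - 1.
  move=> i Hi.
  have HiN : i < N - g by lia.
  have Hl := pf_lt s HiN.
  case: (ltnP (pf s i) (N - m - 2)) => H1; first by left.
  case: (eqVneq (pf s i) (N - g - 1)) => H2; first by right.
  exfalso.
  have E := tail (pf s i + 1) ltac:(lia) ltac:(lia).
  have := @pf_inj _ s i (pf s i + 1) HiN ltac:(lia).
  rewrite E; lia.
have Hr : forall i, i < N -> PsiF m N g (pf s) i < N.
  move=> i Hi; case: (PsiF_spec m N g (pf s) i) => [[H1 ->]|[[H1 ->]|[[H1 ->]|[H1 [H2 ->]]]]]; try lia.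
  have := @pf_lt _ s i ltac:(lia); lia.
have Hinj : forall i k, i < N -> k < N -> PsiF m N g (pf s) i = PsiF m N g (pf s) k -> i = k.
  move=> i k Hi Hk.
  case: (PsiF_spec m N g (pf s) i) => [[H1 ->]|[[H1 ->]|[[H1 ->]|[H1 [H2 ->]]]]];
  case: (PsiF_spec m N g (pf s) k) => [[H3 ->]|[[H3 ->]|[[H3 ->]|[H3 [H4 ->]]]]]; try lia.
  - by apply: pf_inj; lia.
  - have := key i H1; have := @pf_lt _ s i ltac:(lia); lia.
  - have := key i H1; lia.
  - have := key i H1; lia.
  - have := key k H3; have := @pf_lt _ s k ltac:(lia); lia.
  - have := key k H3; lia.
  - have := key k H3; lia.
have HE := mkE Hr Hinj.
split; first exact: HE.
apply/Sset_P; split.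
- move=> i Hi; rewrite /Psi HE //.
  case: (PsiF_spec m N g (pf s) i) => [[H1 ->]|[[H1 ->]|[[H1 ->]|[H1 [H2 ->]]]]]; try lia.
  apply: V; lia.
- move=> i H1 H2; rewrite /Psi HE; last by lia.
  case: (PsiF_spec m N g (pf s) i) => [[H3 ->]|[[H3 ->]|[[H3 ->]|[H3 [H4 ->]]]]]; try lia.
  have := @pf_lt _ s i ltac:(lia); lia.
- done.
- rewrite /Psi HE; last by lia.
  case: (PsiF_spec m N g (pf s) (N - m - 1 - g)) => [[H3 ->]|[[H3 ->]|[[H3 ->]|[H3 [H4 ->]]]]]; try lia.
  have -> : N - m - 1 - g = N - g - m - 1 by lia.
  rewrite Hut; lia.
Qed.

Lemma S_card m N g : m + 2 <= N -> 1 <= g <= m + 1 -> g <= N - m - 1 ->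
  #|Sset m N g| = Q m (N - g) (m + 2 - g).
Proof.
move=> HN Hg Hgt; rewrite /Q.
apply: (@card_bij_in _ _ _ _ (@Phi m N g) (Psi m N g)).
- by move=> s Hs; case: (Phi_ok HN Hg Hgt Hs).
- by move=> s Hs; case: (Psi_ok HN Hg Hgt Hs).
- move=> s Hs.
  have [HP HQ] := Phi_ok HN Hg Hgt Hs.
  have [HS _] := Psi_ok HN Hg Hgt HQ.
  have /Sset_P [V W _ Fu] := Hs.
  apply: perm_ext => i Hi; rewrite HS //.
  case: (PsiF_spec m N g (pf (Phi m g s)) i) => [[H1 ->]|[[H1 ->]|[[H1 ->]|[H1 [H2 ->]]]]].
  + by rewrite HP; [rewrite /PhiF H1|lia].
  + by rewrite H1 L_up_t //; lia.
  + symmetry; apply: (@L_tail2 m N s (N - m - 1 - g)) => //; try lia.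
    by move=> k K1 K2; apply: W; lia.
  + symmetry; apply: (@L_tail1 m N s (m + 2 - g)) => //; try lia.
    by move=> k K1 K2; apply: W; lia.
- move=> s Hs.
  have [HS HSs] := Psi_ok HN Hg Hgt Hs.
  have [HP _] := Phi_ok HN Hg Hgt HSs.
  have /Qset_P [V W] := Hs.
  apply: perm_ext => i Hi; rewrite HP //.
  case: (PhiF_spec m (Psi m N g s) i) => [[H1 ->]|[H1 ->]].
  + rewrite HS; last by lia.
    by rewrite /PsiF H1.
  + symmetry; apply: (@L_tail1 m (N - g) s g) => //; try lia.
    by move=> k K1 K2; apply: W; lia.
Qed.


Definition F m L g := Q m (L + m + 1) (m + 2 - g).

Lemma F0 m L : F m L 0 = (L == 0).
Proof.
rewrite /F subn0; case: L => [|L] /=; first by rewrite add0n Q_base.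
by rewrite Q_top //; lia.
Qed.

Lemma FS m L g : g < m + 1 ->
  F m L g.+1 = F m L g + (if m + 1 - g <= L then F m (L - (m + 1 - g)) (m + 1 - g) else 0).
Proof.
move=> Hg; rewrite /F.
have -> : m + 2 - g.+1 = m + 1 - g by lia.
rewrite Q_split; last by lia.
have -> : (m + 1 - g).+1 = m + 2 - g by lia.
congr (_ + _).
case: ifP => Hk.
  rewrite S_card; try lia.
  congr Q; lia.
apply/eqP; rewrite cards_eq0; apply/eqP; apply/setP => s; rewrite !inE.
have -> : (m + 1 - g <= L + m + 1 - m - 1) = false by apply/negbTE; lia.
by rewrite andbF.
Qed.

Definition Sn q n := s_nat 1 q n.

Lemma s_aux_stable q n k1 k2 : 0 < q -> n < k1 -> n < k2 -> s_aux 1 q k1 n = s_aux 1 q k2 n.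
Proof.
move=> Hq.
elim: n {-2}n (leqnn n) k1 k2 => [|n IH] n0 Hn0 k1 k2 H1 H2.
  have -> : n0 = 0 by lia.
  case: k1 H1 => [|k1] // _; case: k2 H2 => [|k2] // _ /=.
  by case: q Hq.
case: k1 H1 => [|k1] // H1; case: k2 H2 => [|k2] // H2 /=.
congr (_ + _ + _).
  by case: ifP => // Hc; apply: IH; lia.
by case: ifP => // Hc; apply: IH; lia.
Qed.

Lemma Sn0 q : 0 < q -> Sn q 0 = 1.
Proof. by rewrite /Sn /s_nat /=; case: q. Qed.

Lemma SnS q n : 0 < q ->
  Sn q n.+1 = Sn q n + (if q <= n.+1 then Sn q (n.+1 - q) else 0).
Proof.
move=> Hq; rewrite /Sn /s_nat.
have E : s_aux 1 q n.+2 n.+1 = (n.+1 == 0) + (if 1 <= n.+1 then s_aux 1 q n.+1 (n.+1 - 1) else 0)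
  + (if q <= n.+1 then s_aux 1 q n.+1 (n.+1 - q) else 0) by [].
rewrite E; congr (_ + _); first by rewrite subn1.
by case: ifP => // Hc; apply: s_aux_stable; lia.
Qed.

Definition G m r g := \sum_(0 <= L < r.+1) F m L g * (Sn (m + 2) (r - L)) ^ 2.

Lemma shift_sum (a b : nat -> nat) r k :
  \sum_(0 <= L < r.+1) (if k <= L then a (L - k) else 0) * b (r - L) =
  if k <= r then \sum_(0 <= L < (r - k).+1) a L * b (r - k - L) else 0.
Proof.
case: ifP => Hk.
  rewrite (@big_cat_nat _ _ _ k) //=; last by lia.
  rewrite big1_seq ?add0n; last first.
    move=> i; rewrite mem_index_iota => /andP [_ Hi].
    by have -> : (k <= i) = false by apply/negbTE; lia.
  rewrite -{1}(add0n k) big_addn.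
  have -> : r.+1 - k = (r - k).+1 by lia.
  apply: eq_bigr => i _.
  have -> : (k <= i + k) = true by lia.
  rewrite addnK; congr (_ * b _); lia.
apply: big1_seq => i; rewrite mem_index_iota => /andP [_ Hi].
by have -> : (k <= i) = false by apply/negbTE; lia.
Qed.

Lemma G_id m r g : g <= m + 1 -> G m r g = Sn (m + 2) r * Sn (m + 2) (r + g).
Proof.
move: g; elim/ltn_ind: r => r IH g.
elim: g => [|g IHg] Hg.
  rewrite /G big_nat_recl // F0 /= big1 ?addn0.
    by rewrite subn0 mul1n expnS expn1.
  by move=> i _; rewrite F0.
have Hg' : g < m + 1 by lia.
rewrite /G.
under eq_bigr => L _ do rewrite FS // mulnDl.
rewrite big_split /= -/(G m r g) IHg; last by lia.
rewrite (shift_sum (fun x => F m x (m + 1 - g)) (fun j => Sn (m + 2) j ^ 2)).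
rewrite [r + g.+1]addnS SnS; last by lia.
rewrite mulnDr; congr (_ + _).
case: ifP => Hk.
  have -> : m + 2 <= (r + g).+1 by lia.
  rewrite -/(G m (r - (m + 1 - g)) (m + 1 - g)) IH; try lia.
  have -> : (r + g).+1 - (m + 2) = r - (m + 1 - g) by lia.
  have -> : r - (m + 1 - g) + (m + 1 - g) = r by lia.
  by rewrite mulnC.
have -> : (m + 2 <= (r + g).+1) = false by apply/negbTE; lia.
by rewrite muln0.
Qed.


Lemma inW_nat (a b m : nat) :
  (((Posz a - Posz b)%R \in [:: (-2)%R; (-1)%R; Posz m]) : bool) =
  [|| a + 2 == b, a + 1 == b | a == b + m].
Proof.
rewrite !inE.
have E1 : ((Posz a - Posz b)%R == (-2)%R) = (a + 2 == b) by apply/eqP/eqP; lia.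
have E2 : ((Posz a - Posz b)%R == (-1)%R) = (a + 1 == b) by apply/eqP/eqP; lia.
have E3 : ((Posz a - Posz b)%R == Posz m) = (a == b + m) by apply/eqP/eqP; lia.
by rewrite E1 E2 E3 orbA.
Qed.

Lemma Pperm_Q m N : Pperm [:: (-2)%R; (-1)%R; Posz m] N = Q m N 1.
Proof.
rewrite /Pperm /Q /Qset; apply: eq_card => s; rewrite !inE.
have -> : win m 1 s by apply/winP => i; lia.
rewrite andbT /validb; apply: eq_forallb => i.
by rewrite inW_nat !pfE orbA.
Qed.

Lemma sz p q a b : s p q (Posz a - Posz b)%R = if b <= a then s_nat p q (a - b) else 0.
Proof.
case: leqP => H; first by rewrite subzn.
have : ((Posz a - Posz b)%R < 0)%R by lia.
by case: (Posz a - Posz b)%R.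
Qed.

Lemma sum_G m n : m + 2 <= n ->
  \sum_(m + 2 <= l < n.+1)
     Pperm [:: (-2)%R; (-1)%R; Posz m] (l - 1) * (s 1 (m + 2) (Posz (n - l))) ^ 2
  = G m (n - (m + 2)) (m + 1).
Proof.
move=> Hn; rewrite -{1}(add0n (m + 2)) big_addn /G.
have -> : n.+1 - (m + 2) = (n - (m + 2)).+1 by lia.
apply: eq_bigr => i _.
rewrite Pperm_Q /F.
have -> : i + (m + 2) - 1 = i + m + 1 by lia.
have -> : m + 2 - (m + 1) = 1 by lia.
have -> : n - (i + (m + 2)) = n - (m + 2) - i by lia.
by [].
Qed.

Theorem mainTheorem6 (m n : nat) :
  (s 1 (m + 2) (Posz n)) ^ 2 =
    (n == 0) + (s 1 (m + 2) (Posz n - 1)%R) ^ 2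
    + (s 1 (m + 2) (Posz n - Posz (m + 2))%R) ^ 2
    + 2 * \sum_(m + 2 <= l < n.+1)
            Pperm [:: (-2)%R; (-1)%R; Posz m] (l - 1) * (s 1 (m + 2) (Posz (n - l))) ^ 2.
Proof.
have E1 : (Posz n - 1)%R = (Posz n - Posz 1)%R by [].
rewrite E1 !sz; clear E1.
change (s 1 (m + 2) (Posz n)) with (Sn (m + 2) n).
case: n => [|n].
  rewrite big_geq //; last by lia.
  have -> : (m + 2 <= 0) = false by apply/negbTE; lia.
  change (s_nat 1 (m + 2) 0) with (Sn (m + 2) 0).
  by rewrite Sn0 //; lia.
rewrite SnS //; last by lia.
have -> : (1 <= n.+1) = true by [].
have -> : n.+1 - 1 = n by lia.
change (s_nat 1 (m + 2)) with (Sn (m + 2)).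
case: ifP => H.
  rewrite sum_G // G_id //.
  have -> : n.+1 - (m + 2) + (m + 1) = n by lia.
  set A := Sn (m + 2) n. set B := Sn (m + 2) (n.+1 - (m + 2)).
  by rewrite /= add0n sqrnD [B * A]mulnC.
rewrite big_geq; last by lia.
by rewrite /= add0n !addn0.
Qed.
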